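(* Let $X$ be a non-degenerate random variable with $E|X|<\infty$ whose cumulative distribution function $F$ is differentiable with density $f$, and let $\mu=EX$. Then $$\lim_{\alpha\to 1/2-} s_2(\alpha) = 2F(\mu)-1 .$$
   Context: For a random variable $X$ with $E|X|<\infty$ and $\tau\in(0,1)$, the $\tau$-expectile $e_X(\tau)$ is the unique real number $t$ satisfying $\tau\, E(X-t)_+ = (1-\tau)\, E(X-t)_-$, where $x_+=\max\{x,0\}$ and $x_-=\max\{-x,0\}$; $e_X(1/2)=\mu=EX$. For $\alpha\in(0,1/2)$ the normalized expectile skewness is $$s_2(\alpha) = \frac{1}{1-2\alpha}\cdot\frac{e_X(1-\alpha)+e_X(\alpha)-2\mu}{e_X(1-\alpha)-e_X(\alpha)}.$$ *)

(* Defs.v *)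
From Stdlib Require Import Reals Lra.
Open Scope R_scope.

Definition is_cdf (F : R -> R) : Prop :=
  (forall x y, x <= y -> F x <= F y) /\
  (forall x, Un_cv (fun n => F (x + / INR (S n))) (F x)) /\
  (forall eps, 0 < eps -> exists M, forall x, x <= M -> Rabs (F x) < eps) /\
  (forall eps, 0 < eps -> exists M, forall x, M <= x -> Rabs (F x - 1) < eps).

Definition degenerate (F : R -> R) : Prop :=
  exists c, forall x, F x = if Rle_dec c x then 1 else 0.

Definition int_upper (g : R -> R) (t L : R) : Prop :=
  forall eps, 0 < eps -> exists M, forall b, M <= b ->
    exists pr : Riemann_integrable g t b, Rabs (RiemannInt pr - L) < eps.

Definition int_lower (g : R -> R) (t L : R) : Prop :=
  forall eps, 0 < eps -> exists M, forall a, a <= M ->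
    exists pr : Riemann_integrable g a t, Rabs (RiemannInt pr - L) < eps.

(* E (X - t)_+ = int_t^{+oo} (1 - F)   and   E (X - t)_- = int_{-oo}^t F. *)
Definition Epos (F : R -> R) (t L : R) : Prop := int_upper (fun x => 1 - F x) t L.
Definition Eneg (F : R -> R) (t L : R) : Prop := int_lower F t L.

Definition integrable (F : R -> R) : Prop :=
  exists Lp Lm, Epos F 0 Lp /\ Eneg F 0 Lm.

Definition is_mean (F : R -> R) (mu : R) : Prop :=
  exists Lp Lm, Epos F 0 Lp /\ Eneg F 0 Lm /\ mu = Lp - Lm.

Definition is_expectile (F : R -> R) (tau t : R) : Prop :=
  exists Lp Lm, Epos F t Lp /\ Eneg F t Lm /\ tau * Lp = (1 - tau) * Lm.

Definition s2 (e : R -> R) (mu alpha : R) : R :=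
  / (1 - 2 * alpha) * ((e (1 - alpha) + e alpha - 2 * mu) / (e (1 - alpha) - e alpha)).

(* Main.v *)
Require Import Defs.
From Stdlib Require Import Reals Lra.
From Coquelicot Require Import Coquelicot.
Open Scope R_scope.

Lemma exRc (g : R -> R) a b : (forall x, continuity_pt g x) -> ex_RInt g a b.
Proof. intros H; apply (ex_RInt_continuous (V:=R_CompleteNormedModule)); intros z _; apply continuity_pt_filterlim, H. Qed.

Lemma RInt_cst (c a b : R) : RInt (fun _ => c) a b = (b - a) * c.
Proof. rewrite RInt_const. reflexivity. Qed.

Lemma RInt_Chas (g : R -> R) a b c : ex_RInt g a b -> ex_RInt g b c ->
  RInt g a b + RInt g b c = RInt g a c.
Proof. intros H1 H2. exact (RInt_Chasles g a b c H1 H2). Qed.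

Lemma RInt_add (g h : R -> R) a b : ex_RInt g a b -> ex_RInt h a b ->
  RInt (fun x => g x + h x) a b = RInt g a b + RInt h a b.
Proof. intros H1 H2. exact (RInt_plus g h a b H1 H2). Qed.

Lemma RInt_sub (g h : R -> R) a b : ex_RInt g a b -> ex_RInt h a b ->
  RInt (fun x => g x - h x) a b = RInt g a b - RInt h a b.
Proof. intros H1 H2. exact (RInt_minus g h a b H1 H2). Qed.

Lemma RInt_swap (g : R -> R) a b : ex_RInt g a b -> RInt g b a = - RInt g a b.
Proof. intros H. rewrite <- (opp_RInt_swap g a b H). reflexivity. Qed.

Definition U (g : R -> R) t L := forall eps, 0 < eps -> exists M, forall b, M <= b -> Rabs (RInt g t b - L) < eps.
Definition Lo (g : R -> R) t L := forall eps, 0 < eps -> exists M, forall a, a <= M -> Rabs (RInt g a t - L) < eps.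

Lemma int_upper_U g t L : (forall a b, ex_RInt g a b) -> (int_upper g t L <-> U g t L).
Proof.
  intros Hex; split; intros H eps He; destruct (H eps He) as [M HM]; exists M; intros b Hb.
  - destruct (HM b Hb) as [pr Hpr]. rewrite (RInt_Reals g t b pr). exact Hpr.
  - exists (ex_RInt_Reals_0 _ _ _ (Hex t b)). rewrite <- RInt_Reals. auto.
Qed.

Lemma int_lower_Lo g t L : (forall a b, ex_RInt g a b) -> (int_lower g t L <-> Lo g t L).
Proof.
  intros Hex; split; intros H eps He; destruct (H eps He) as [M HM]; exists M; intros b Hb.
  - destruct (HM b Hb) as [pr Hpr]. rewrite (RInt_Reals g b t pr). exact Hpr.
  - exists (ex_RInt_Reals_0 _ _ _ (Hex b t)). rewrite <- RInt_Reals. auto.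
Qed.

Lemma U_shift g t L : (forall a b, ex_RInt g a b) -> U g 0 L -> U g t (L - RInt g 0 t).
Proof.
  intros Hex H eps He; destruct (H eps He) as [M HM]; exists M; intros b Hb.
  specialize (HM b Hb). rewrite <- (RInt_Chas g 0 t b) in HM by auto.
  replace (RInt g t b - (L - RInt g 0 t)) with (RInt g 0 t + RInt g t b - L) by ring. exact HM.
Qed.

Lemma Lo_shift g t L : (forall a b, ex_RInt g a b) -> Lo g 0 L -> Lo g t (L + RInt g 0 t).
Proof.
  intros Hex H eps He; destruct (H eps He) as [M HM]; exists M; intros b Hb.
  specialize (HM b Hb). rewrite <- (RInt_Chas g b 0 t) by auto.
  replace (RInt g b 0 + RInt g 0 t - (L + RInt g 0 t)) with (RInt g b 0 - L) by ring. exact HM.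
Qed.

Lemma U_uniq g t L1 L2 : U g t L1 -> U g t L2 -> L1 = L2.
Proof.
  intros H1 H2. destruct (Req_dec L1 L2) as [|Hn]; auto.
  assert (Hp : 0 < Rabs (L1 - L2) / 2) by (assert (L1 - L2 <> 0) by lra; assert (0 < Rabs (L1 - L2)) by (apply Rabs_pos_lt; auto); lra).
  destruct (H1 _ Hp) as [M1 HM1]; destruct (H2 _ Hp) as [M2 HM2].
  specialize (HM1 (Rmax M1 M2) (Rmax_l _ _)); specialize (HM2 (Rmax M1 M2) (Rmax_r _ _)).
  revert HM1 HM2 Hp. split_Rabs; lra.
Qed.

Lemma Lo_uniq g t L1 L2 : Lo g t L1 -> Lo g t L2 -> L1 = L2.
Proof.
  intros H1 H2. destruct (Req_dec L1 L2) as [|Hn]; auto.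
  assert (Hp : 0 < Rabs (L1 - L2) / 2) by (assert (L1 - L2 <> 0) by lra; assert (0 < Rabs (L1 - L2)) by (apply Rabs_pos_lt; auto); lra).
  destruct (H1 _ Hp) as [M1 HM1]; destruct (H2 _ Hp) as [M2 HM2].
  specialize (HM1 (Rmin M1 M2) (Rmin_l _ _)); specialize (HM2 (Rmin M1 M2) (Rmin_r _ _)).
  revert HM1 HM2 Hp. split_Rabs; lra.
Qed.

Lemma U_nonneg g t L : (forall a b, ex_RInt g a b) -> (forall x, 0 <= g x) -> U g t L -> 0 <= L.
Proof.
  intros Hex Hg H. destruct (Rle_dec 0 L) as [|Hn]; auto.
  destruct (H (-L)) as [M HM]; [lra|].
  specialize (HM (Rmax M t) (Rmax_l _ _)).
  assert (0 <= RInt g t (Rmax M t)) by (apply RInt_ge_0; auto; apply Rmax_r).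
  revert HM. split_Rabs; lra.
Qed.

Lemma Lo_nonneg g t L : (forall a b, ex_RInt g a b) -> (forall x, 0 <= g x) -> Lo g t L -> 0 <= L.
Proof.
  intros Hex Hg H. destruct (Rle_dec 0 L) as [|Hn]; auto.
  destruct (H (-L)) as [M HM]; [lra|].
  specialize (HM (Rmin M t) (Rmin_l _ _)).
  assert (0 <= RInt g (Rmin M t) t) by (apply RInt_ge_0; auto; apply Rmin_r).
  revert HM. split_Rabs; lra.
Qed.

Lemma abs_RInt_1 (g : R -> R) a b : (forall a b, ex_RInt g a b) -> (forall x, Rabs (g x) <= 1) ->
  Rabs (RInt g a b) <= Rabs (b - a).
Proof.
  intros Hex Hg. destruct (Rle_dec a b).
  - rewrite (Rabs_right (b - a)) by lra. replace (b - a) with ((b - a) * 1) by ring.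
    apply abs_RInt_le_const; auto.
  - assert (H : Rabs (RInt g b a) <= (a - b) * 1) by (apply abs_RInt_le_const; auto; lra).
    rewrite RInt_swap, Rabs_Ropp in H by auto. rewrite (Rabs_left1 (b - a)) by lra. lra.
Qed.

Lemma RInt_extR (f g : R -> R) a b : (forall x, f x = g x) -> RInt f a b = RInt g a b.
Proof. intros H; apply RInt_ext; intros; apply H. Qed.

Theorem mainTheorem3 (F f e : R -> R) (mu : R) :
  is_cdf F ->
  (forall x, derivable_pt_lim F x (f x)) ->
  ~ degenerate F ->
  integrable F ->
  is_mean F mu ->
  (forall tau, 0 < tau < 1 -> is_expectile F tau (e tau)) ->
  limit1_in (s2 e mu) (fun a => 0 < a < 1/2) (2 * F mu - 1) (1/2).
Proof.
  intros [Fmono [_ [Fm Fp]]] Hd _ _ Hmean He.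
  assert (Fc : forall x, continuity_pt F x).
  { intros x; apply derivable_continuous_pt; exists (f x); apply Hd. }
  assert (F0 : forall x, 0 <= F x).
  { intros x. destruct (Rle_dec 0 (F x)) as [|Hn]; auto.
    destruct (Fm (- F x)) as [M HM]; [lra|].
    specialize (HM (Rmin x M) (Rmin_r _ _)). specialize (Fmono _ _ (Rmin_l x M)).
    revert HM. split_Rabs; lra. }
  assert (F1 : forall x, F x <= 1).
  { intros x. destruct (Rle_dec (F x) 1) as [|Hn]; auto.
    destruct (Fp (F x - 1)) as [M HM]; [lra|].
    specialize (HM (Rmax x M) (Rmax_r _ _)). specialize (Fmono _ _ (Rmax_l x M)).
    revert HM. split_Rabs; lra. }
  set (g1 := fun x => 1 - F x).
  set (g := fun x => 2 * F x - 1).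
  assert (exF : forall a b, ex_RInt F a b) by (intros; apply exRc; auto).
  assert (ex1 : forall a b, ex_RInt g1 a b).
  { intros; apply exRc; intros x.
    change (continuity_pt (minus_fct (fct_cte 1) F) x).
    apply continuity_pt_minus; auto. apply continuity_pt_const; intros ? ?; reflexivity. }
  assert (exg : forall a b, ex_RInt g a b).
  { intros; apply exRc; intros x.
    change (continuity_pt (minus_fct (mult_fct (fct_cte 2) F) (fct_cte 1)) x).
    apply continuity_pt_minus; [apply continuity_pt_mult; auto|];
    apply continuity_pt_const; intros ? ?; reflexivity. }
  destruct Hmean as [Lp [Lm [HP [HN Hmu]]]].
  set (P := fun t => Lp - RInt g1 0 t).
  set (N := fun t => Lm + RInt F 0 t).
  assert (HU : forall t, U g1 t (P t)).
  { intros t. apply U_shift; auto. apply int_upper_U; auto. }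
  assert (HL : forall t, Lo F t (N t)).
  { intros t. apply Lo_shift; auto. apply int_lower_Lo; auto. }
  assert (Pnn : forall t, 0 <= P t).
  { intros t. apply (U_nonneg g1 t); auto. intros x; unfold g1; specialize (F1 x); lra. }
  assert (Nnn : forall t, 0 <= N t).
  { intros t. apply (Lo_nonneg F t); auto. }
  assert (HPN : forall t, P t - N t = mu - t).
  { intros t. unfold P, N. 
    assert (RInt g1 0 t + RInt F 0 t = t).
    { rewrite <- RInt_add by auto. unfold g1.
      rewrite (RInt_extR _ (fun _ => 1)) by (intros; ring). rewrite RInt_cst. ring. }
    lra. }
  assert (HS : forall t, P t + N t = Lp + Lm + RInt g 0 t).
  { intros t. unfold P, N.
    assert (RInt F 0 t - RInt g1 0 t = RInt g 0 t).
    { rewrite <- RInt_sub by auto. unfold g1, g. apply RInt_extR; intros; ring. }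
    lra. }
  assert (Hexp : forall tau, 0 < tau < 1 -> tau * P (e tau) = (1 - tau) * N (e tau)).
  { intros tau Ht. destruct (He tau Ht) as [Lp' [Lm' [H1 [H2 H3]]]].
    apply int_upper_U in H1; auto. apply int_lower_Lo in H2; auto.
    rewrite <- (U_uniq _ _ _ _ H1 (HU _)), <- (Lo_uniq _ _ _ _ H2 (HL _)). exact H3. }
  assert (Spos : forall t, 0 < P t + N t).
  { intros t. pose proof (Fc t) as Ct.
    unfold continuity_pt, continue_in, limit1_in, limit_in in Ct.
    destruct (Ct (1/4)) as [alp [Ha Hc]]; [lra|].
    set (d := alp / 2).
    assert (H1 : Rabs (F (t + d) - F t) < 1/4).
    { apply (Hc (t + d)). split; [split; [exact I| unfold d; lra]|].
      simpl; unfold R_dist. rewrite Rabs_right; unfold d; lra. }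
    assert (H2 : Rabs (F (t - d) - F t) < 1/4).
    { apply (Hc (t - d)). split; [split; [exact I| unfold d; lra]|].
      simpl; unfold R_dist. rewrite Rabs_left; unfold d; lra. }
    assert (HN1 : N t = N (t - d) + RInt F (t - d) t).
    { unfold N. rewrite <- (RInt_Chas F 0 (t - d) t) by auto. ring. }
    assert (HP1 : P t = P (t + d) + RInt g1 t (t + d)).
    { unfold P. rewrite <- (RInt_Chas g1 0 t (t + d)) by auto. ring. }
    assert (I1 : RInt (fun _ => F (t - d)) (t - d) t <= RInt F (t - d) t).
    { apply RInt_le; auto. unfold d; lra. apply ex_RInt_const.
      intros x Hx; apply Fmono; lra. }
    assert (I2 : RInt (fun _ => 1 - F (t + d)) t (t + d) <= RInt g1 t (t + d)).
    { apply RInt_le; auto. unfold d; lra. apply ex_RInt_const.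
      intros x Hx; unfold g1; assert (F x <= F (t + d)) by (apply Fmono; lra); lra. }
    rewrite RInt_cst in I1, I2.
    pose proof (Pnn (t + d)); pose proof (Nnn (t - d)).
    assert (0 < d) by (unfold d; lra).
    revert H1 H2; split_Rabs; nra. }
  assert (Slip : forall t, P t + N t <= P mu + N mu + Rabs (t - mu)).
  { intros t. rewrite !HS. rewrite <- (RInt_Chas g 0 mu t) by auto.
    assert (Rabs (RInt g mu t) <= Rabs (t - mu)).
    { apply abs_RInt_1; auto. intros x; unfold g. specialize (F0 x); specialize (F1 x).
      split_Rabs; lra. }
    revert H; split_Rabs; lra. }
  set (Sm := P mu + N mu). assert (HSm : 0 < Sm) by apply Spos.
  unfold limit1_in, limit_in. intros eps Heps.
  pose proof (Fc mu) as Cm. unfold continuity_pt, continue_in, limit1_in, limit_in in Cm.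
  destruct (Cm (eps / 4)) as [eta [Heta Hc]]; [lra|].
  assert (Hcm : forall y, Rabs (y - mu) < eta -> Rabs (F y - F mu) < eps / 4).
  { intros y Hy. destruct (Req_dec y mu) as [->|Hne].
    - rewrite Rminus_diag, Rabs_R0; lra.
    - apply (Hc y). split; [split; [exact I| auto]| exact Hy]. }
  exists (Rmin (1/8) (eta / (4 * Sm + 1))). split.
  { apply Rmin_pos; [lra|]. apply Rdiv_lt_0_compat; lra. }
  intros x [[Hx0 Hx1] Hdist]. change R in x. simpl in Hdist |- *; unfold R_dist in Hdist |- *.
  rewrite Rabs_left in Hdist by lra.
  set (h := 1/2 - x).
  assert (Hh1 : h < 1/8) by (pose proof (Rmin_l (1/8) (eta / (4 * Sm + 1))); unfold h; lra).
  assert (Hh2 : h < eta / (4 * Sm + 1)) by (pose proof (Rmin_r (1/8) (eta / (4 * Sm + 1))); unfold h; lra).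
  assert (Hh0 : 0 < h) by (unfold h; lra).
  assert (Hh3 : 4 * h * Sm < eta).
  { apply (Rmult_lt_compat_r (4 * Sm + 1)) in Hh2; [|lra].
    unfold Rdiv in Hh2. rewrite Rmult_assoc, Rinv_l, Rmult_1_r in Hh2 by lra. nra. }
  unfold s2.
  set (u := e (1 - x)). set (l := e x).
  assert (Eu : (1 - x) * P u = (1 - (1 - x)) * N u) by (apply Hexp; lra).
  assert (El : x * P l = (1 - x) * N l) by (apply Hexp; lra).
  pose proof (HPN u) as PNu. pose proof (HPN l) as PNl.
  assert (Hu : u - mu = 2 * h * (P u + N u)) by (unfold h; nra).
  assert (Hl : mu - l = 2 * h * (P l + N l)) by (unfold h; nra).
  pose proof (Spos u); pose proof (Spos l).
  assert (Bu : Rabs (u - mu) <= 4 * h * Sm).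
  { pose proof (Slip u). fold Sm in H1.
    assert (0 <= u - mu) by nra. rewrite Rabs_right in H1 |- * by lra. nra. }
  assert (Bl : Rabs (l - mu) <= 4 * h * Sm).
  { pose proof (Slip l). fold Sm in H1.
    assert (0 <= mu - l) by nra. rewrite Rabs_left1 in H1 |- * by lra. nra. }
  assert (Hul : 0 < u - l) by nra.
  set (c := 2 * F mu - 1).
  assert (HD : P u + N u - (P l + N l) = RInt g l u).
  { rewrite !HS. rewrite <- (RInt_Chas g 0 l u) by auto. ring. }
  assert (Hq : / (1 - 2 * x) * ((u + l - 2 * mu) / (u - l)) - c
               = RInt (fun y => g y - c) l u / (u - l)).
  { rewrite RInt_sub by (auto; apply ex_RInt_const). rewrite RInt_cst, <- HD.
    replace (1 - 2 * x) with (2 * h) by (unfold h; lra).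
    replace (u + l - 2 * mu) with (2 * h * (P u + N u - (P l + N l))) by lra.
    field. split; lra. }
  rewrite Hq.
  assert (Hb : Rabs (RInt (fun y => g y - c) l u) <= (u - l) * (eps / 2)).
  { apply abs_RInt_le_const; [lra| apply (ex_RInt_minus (V:=R_NormedModule)); auto; apply ex_RInt_const|].
    intros y Hy. unfold g, c.
    assert (Rabs (F y - F mu) < eps / 4).
    { apply Hcm. revert Bu Bl; split_Rabs; lra. }
    revert H1; split_Rabs; lra. }
  unfold Rdiv. rewrite Rabs_mult, Rabs_inv, (Rabs_right (u - l)) by lra.
  assert (Rabs (RInt (fun y => g y - c) l u) * / (u - l) <= eps / 2).
  { apply (Rmult_le_reg_r (u - l)); [lra|].
    rewrite Rmult_assoc, Rinv_l, Rmult_1_r by lra. lra. }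
  lra.
Qed.
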